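(* Let $q$ be a prime power, let $b,n,m',s\in\mathbb{N}$ with $b<n$, and set $m=m's$. Let $\mathcal S_q=\{\mathbf x\in\mathbb F_q^n:\mathrm{wt}(\mathbf x)\le b\}$. Fix a primitive polynomial $p(x)$ of degree $s$ over $\mathbb F_q$ and a root $\alpha\in\mathbb F_{q^s}$ of it, and let $\phi_s$ be the associated map $\mathbb F_q^{m\times n}\to\mathbb F_{q^s}^{m'\times n}$ described in the context. Let $\mathbf A\in\mathbb F_q^{m\times n}$ be such that $\phi_s(\mathbf A)$ is a parity check matrix of an $[n,n-m',d]_{q^s}$ linear code with $d>2b$. Then every $\mathbf x\in\mathcal S_q$ can be exactly recovered from the noiseless measurement $\mathbf y=\mathbf A\mathbf x$; that is, there exists a map $D:\mathbb F_q^m\to\mathbb F_q^n$ with $D(\mathbf A\mathbf x)=\mathbf x$ for all $\mathbf x\in\mathcal S_q$.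
   Context: $\mathbb F_q$ denotes the finite field with $q$ elements and $\mathrm{wt}(\mathbf x)$ the number of nonzero entries of a vector $\mathbf x$. A primitive polynomial of degree $s$ over $\mathbb F_q$ is a monic irreducible polynomial of degree $s$ having a primitive element $\alpha$ of $\mathbb F_{q^s}$ (a generator of its multiplicative group) as a root; then $\{1,\alpha,\dots,\alpha^{s-1}\}$ is a basis of $\mathbb F_{q^s}$ over $\mathbb F_q$, and $\mathbb F_q\subseteq\mathbb F_{q^s}$. For $m=m's$ and $\mathbf C=[c_{ij}]\in\mathbb F_q^{m\times n}$, $\phi_s(\mathbf C)=[c'_{kl}]\in\mathbb F_{q^s}^{m'\times n}$ is defined by $c'_{kl}=\sum_{t=0}^{s-1}c_{(k-1)s+t+1,\,l}\,\alpha^t$ ($1\le k\le m'$, $1\le l\le n$). An $[N,K,D]_Q$ linear code is a $K$-dimensional subspace of $\mathbb F_Q^N$ whose minimum Hamming distance between distinct codewords is $D$. A parity check matrix of such a code is an $(N-K)\times N$ matrix over $\mathbb F_Q$ of rank $N-K$ whose null space is the code. *)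

(* Defs.v *)
From HB Require Import structures.
From mathcomp Require Import all_boot all_order all_algebra all_field.
From mathcomp Require Import zify.
Set Implicit Arguments. Unset Strict Implicit. Unset Printing Implicit Defensive.
Import GRing.Theory.
Local Open Scope ring_scope.

Definition wt (K : nzRingType) (n : nat) (x : 'cV[K]_n) : nat :=
  #|[set j : 'I_n | x j 0 != 0]|.

(* row index (k-1)s + t + 1 (1-based) = k*s + t (0-based) *)
Lemma phi_idx_proof (m' s : nat) (k : 'I_m') (t : 'I_s) : (k * s + t < m' * s)%N.
Proof.
have hk := ltn_ord k; have ht := ltn_ord t.
have : (k.+1 * s <= m' * s)%N by rewrite leq_mul2r hk orbT.
rewrite mulSn; lia.
Qed.

Definition phi_idx (m' s : nat) (k : 'I_m') (t : 'I_s) : 'I_(m' * s) :=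
  Ordinal (phi_idx_proof k t).

Definition phi_s (F L : fieldType) (iota : {rmorphism F -> L}) (alpha : L)
  (m' s n : nat) (A : 'M[F]_(m' * s, n)) : 'M[L]_(m', n) :=
  \matrix_(k < m', l < n) \sum_(t < s) iota (A (phi_idx k t) l) * alpha ^+ t.

Definition code_of (L : fieldType) (r n : nat) (H : 'M[L]_(r, n)) : pred 'cV[L]_n :=
  fun c => H *m c == 0.

Definition is_parity_check_of (L : fieldType) (r N : nat) (H : 'M[L]_(r, N))
  (K D : nat) : Prop :=
  r = (N - K)%N /\ \rank H = (N - K)%N /\
  (exists2 c : 'cV[L]_N, (c \in code_of H) && (c != 0) & wt c = D) /\
  (forall c : 'cV[L]_N, c \in code_of H -> c != 0 -> (D <= wt c)%N).

Definition primitive_poly_root (F L : finFieldType) (iota : {rmorphism F -> L})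
  (s : nat) (p : {poly F}) (alpha : L) : Prop :=
  [/\ p \is monic, irreducible_poly p, size p = s.+1,
      root (map_poly iota p) alpha & (#|L|.-1).-primitive_root alpha].

(* Main.v *)
Require Import Defs.
From HB Require Import structures.
From mathcomp Require Import all_boot all_order all_algebra all_field.
Import GRing.Theory.
Local Open Scope ring_scope.

Lemma phi_ker (F L : fieldType) (iota : {rmorphism F -> L}) (alpha : L)
  (m' s n : nat) (A : 'M[F]_(m' * s, n)) (z : 'cV[F]_n) :
  A *m z = 0 -> phi_s iota alpha A *m map_mx iota z = 0.
Proof.
move=> Az; apply/matrixP=> k j; rewrite !mxE.
under eq_bigr => l _ do rewrite !mxE big_distrl /=.
rewrite exchange_big /= big1 // => t _.
have := congr1 (fun M : 'M[F]_(m' * s, 1) => M (phi_idx k t) j) Az; rewrite !mxE => H.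
transitivity (alpha ^+ t * iota (\sum_l A (phi_idx k t) l * z l j)); last first.
  by rewrite H rmorph0 mulr0.
rewrite rmorph_sum mulr_sumr; apply: eq_bigr => l _.
by rewrite rmorphM /= mulrA [alpha ^+ t * _]mulrC.
Qed.

Lemma wt_map (F L : fieldType) (iota : {rmorphism F -> L}) n (z : 'cV[F]_n) :
  wt (map_mx iota z) = wt z.
Proof.
rewrite /wt; apply: eq_card => j; by rewrite !inE mxE fmorph_eq0.
Qed.

Lemma wt_sub (K : nzRingType) n (x y : 'cV[K]_n) : (wt (x - y) <= wt x + wt y)%N.
Proof.
rewrite /wt; apply: leq_trans (leq_card_setU _ _); apply: subset_leq_card.
apply/subsetP=> j; rewrite !inE !mxE; apply: contraR; rewrite negb_or !negbK.
by move=> /andP[/eqP -> /eqP ->]; rewrite subr0.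
Qed.

Theorem theorem1 (F L : finFieldType) (iota : {rmorphism F -> L})
  (b n m' s d : nat) (p : {poly F}) (alpha : L) (A : 'M[F]_(m' * s, n)) :
  (b < n)%N ->
  #|L| = (#|F| ^ s)%N ->
  primitive_poly_root iota s p alpha ->
  is_parity_check_of (phi_s iota alpha A) (n - m') d ->
  (2 * b < d)%N ->
  exists D : 'cV[F]_(m' * s) -> 'cV[F]_n,
    forall x : 'cV[F]_n, (wt x <= b)%N -> D (A *m x) = x.
Proof.
move=> _ _ _ [_ [_ [_ Hmin]]] Hd.
have inj : forall x y : 'cV[F]_n, (wt x <= b)%N -> (wt y <= b)%N ->
    A *m x = A *m y -> x = y.
  move=> x y hx hy Axy; apply/eqP; rewrite -subr_eq0; apply/negPn/negP => nz.
  have Az : A *m (x - y) = 0 by rewrite mulmxBr Axy subrr.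
  have hc : map_mx iota (x - y) \in code_of (phi_s iota alpha A).
    by rewrite unfold_in /code_of phi_ker.
  have nz' : map_mx iota (x - y) != 0.
    apply: contra nz => /eqP/matrixP H; apply/eqP/matrixP => i j.
    by have := H i j; rewrite !mxE => /eqP; rewrite fmorph_eq0 => /eqP.
  have := Hmin _ hc nz'; rewrite wt_map => h.
  have h3 : (wt x + wt y <= 2 * b)%N.
    rewrite mul2n -addnn; exact: leq_add.
  have h4 := leq_trans (leq_trans h (@wt_sub _ _ x y)) h3.
  move: Hd; rewrite ltnNge h4; exact: id.
exists (fun yv => if [pick x | (wt x <= b)%N && (A *m x == yv)] is Some x then x else 0).
move=> x hx; case: pickP => [z /andP[hz /eqP Az]|/(_ x)].
  exact: inj.
by rewrite hx eqxx.
Qed.
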